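(* Let $\mathcal{I}=\{(i\mid A_i): i\in[m]\}$ be an index coding instance and let $|A|_{\min}=\min_{i\in[m]}|A_i|$. Then for every execution of the UMCD algorithm on $\mathcal{I}$ (with arbitrary tie-breaking), its output satisfies $$\beta_{\text{UMCD}}(\mathcal{I})\le \beta_{\text{MDS}}(\mathcal{I}) = m-|A|_{\min}.$$
   Context: An index coding instance consists of a positive integer $m$ and, for each receiver $i\in[m]=\{1,\dots,m\}$ (who wants message $x_i$), a side-information set $A_i\subseteq[m]\setminus\{i\}$. Write $B_i=[m]\setminus(A_i\cup\{i\})$ (interfering set). For a $0/1$ matrix $\boldsymbol{G}$ with rows indexed by $[r]$ and columns by $[m]$, $\boldsymbol{G}_{[k]}^{L}$ denotes the submatrix formed by the first $k$ rows and the columns indexed by $L\subseteq[m]$, and $\mathrm{mcm}(\boldsymbol{G})$ denotes the maximum number of entries equal to $1$ of $\boldsymbol{G}$ no two of which lie in the same row or the same column (the size of a maximum matching in the bipartite graph between rows and columns with an edge wherever the entry is $1$); a matrix with no columns has $\mathrm{mcm}=0$. UMCD algorithm: start with $N=[m]$, $k=0$. While $N\neq\emptyset$: set $k\leftarrow k+1$; choose $w\in N$ with $|A_w|=\min_{i\in N}|A_i|$ (ties broken arbitrarily); let the $k$-th row of $\boldsymbol{G}$ be the indicator vector of $\{w\}\cup A_w$ (entry $1$ in the columns of $\{w\}\cup A_w$, $0$ elsewhere); remove $w$ from $N$; then remove from $N$ every $i\in N$ with $\mathrm{mcm}(\boldsymbol{G}_{[k]}^{\{i\}\cup B_i})=\mathrm{mcm}(\boldsymbol{G}_{[k]}^{B_i})+1$.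 When $N=\emptyset$ the algorithm outputs $\beta_{\text{UMCD}}(\mathcal{I})=k$. *)

(* Defs.v *)
From mathcomp Require Import all_boot.
Set Implicit Arguments. Unset Printing Implicit Defensive.

(* An index coding instance on m receivers: A i is the side-information set of
   receiver i (required: i \notin A i). *)

Definition interf (m : nat) (A : 'I_m -> {set 'I_m}) (i : 'I_m) : {set 'I_m} :=
  ~: (i |: A i).

(* The 0/1 matrix G with k rows is represented by the sequence of its rows,
   each row being the set of columns carrying a 1. A matching of the submatrix
   G^L (all rows of G, columns in L) is a set of (row, column) positions with
   entry 1, column in L, no two in the same row or column. *)
Definition is_matching (m : nat) (rows : seq {set 'I_m}) (L : {set 'I_m})
    (M : {set 'I_(size rows) * 'I_m}) : bool :=
  [forall p in M, (p.2 \in L) && (p.2 \in nth set0 rows p.1)] &&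
  [forall p in M, forall q in M, ((p.1 == q.1) ==> (p == q)) && ((p.2 == q.2) ==> (p == q))].

Definition mcm (m : nat) (rows : seq {set 'I_m}) (L : {set 'I_m}) : nat :=
  \max_(M : {set 'I_(size rows) * 'I_m} | is_matching rows L M) #|M|.

(* umcd_from A N rows k : starting from the current set N of unsatisfied
   receivers and the rows of G built so far, some execution of the UMCD loop
   (with arbitrary tie-breaking) terminates with output k (= number of rows). *)
Inductive umcd_from (m : nat) (A : 'I_m -> {set 'I_m}) :
    {set 'I_m} -> seq {set 'I_m} -> nat -> Prop :=
  | umcd_stop (rows : seq {set 'I_m}) :
      umcd_from A set0 rows (size rows)
  | umcd_step (N : {set 'I_m}) (rows : seq {set 'I_m}) (w : 'I_m) (k : nat) :
      w \in N ->
      (forall i, i \in N -> #|A w| <= #|A i|) ->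
      umcd_from A
        [set i in N :\ w |
           mcm (rcons rows (w |: A w)) (i |: interf A i)
             != (mcm (rcons rows (w |: A w)) (interf A i)).+1]
        (rcons rows (w |: A w)) k ->
      umcd_from A N rows k.

Definition umcd_output (m : nat) (A : 'I_m -> {set 'I_m}) (k : nat) : Prop :=
  umcd_from A [set: 'I_m] [::] k.

(* |A|_min = min_i |A_i| (for m > 0; the seed m is never smaller since |A_i| < m). *)
Definition Amin (m : nat) (A : 'I_m -> {set 'I_m}) : nat :=
  \big[minn/m]_(i : 'I_m) #|A i|.

Definition beta_MDS (m : nat) (A : 'I_m -> {set 'I_m}) : nat := m - Amin A.

(* Main.v *)
Require Import Defs.
From mathcomp Require Import all_boot zify.
Set Implicit Arguments. Unset Strict Implicit. Unset Printing Implicit Defensive.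

Ltac li := intros; lia.

Lemma hall (T : finType) (x0 : T) n (E : 'I_n -> {set T}) (P : {set 'I_n}) :
  (forall S : {set 'I_n}, S \subset P -> #|S| <= #|\bigcup_(s in S) E s|) ->
  exists f : 'I_n -> T, {in P &, injective f} /\ forall s, s \in P -> f s \in E s.
Proof.
move: {2}#|P| (leqnn #|P|) => k; elim: k E P => [|k IH] E P hk hP.
  exists (fun _ => x0); move: hk; rewrite leqn0 cards_eq0 => /eqP ->.
  by split => [s|s]; rewrite inE.
have [->|/set0Pn [p pP]] := eqVneq P set0.
  by exists (fun _ => x0); split => [s|s]; rewrite inE.
case: (pickP [pred S : {set 'I_n} | [&& S \proper P, S != set0 &
                 #|\bigcup_(s in S) E s| <= #|S|]]) => [S /and3P [SP Sn0 Stight]|none].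
- have sSP := proper_sub SP.
  have ltS := proper_card SP.
  set NS := \bigcup_(s in S) E s.
  have [f1 [f1i f1E]] : exists f : 'I_n -> T, {in S &, injective f} /\ forall s, s \in S -> f s \in E s.
    apply: IH; first by lia.
    by move=> S2 S2S; apply: hP; apply: subset_trans S2S sSP.
  have [f2 [f2i f2E]] : exists f : 'I_n -> T, {in P :\: S &, injective f} /\
       forall s, s \in P :\: S -> f s \in E s :\: NS.
    apply: IH.
      have : 0 < #|S| by rewrite card_gt0.
      have := cardsID S P; rewrite (setIidPr sSP). lia.
    move=> S2 S2P.
    have dis : [disjoint S2 & S].
      apply/pred0P => x /=; apply/andP => [[xS2 xS]].
      by move: (subsetP S2P x xS2); rewrite inE xS.
    have h1 := hP (S2 :|: S).
    have : S2 :|: S \subset P.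
      rewrite subUset sSP andbT; apply: subset_trans S2P _; exact: subsetDl.
    move/h1.
    have -> : \bigcup_(s in S2 :|: S) E s = (\bigcup_(s in S2) E s :\: NS) :|: NS.
      apply/setP => x; rewrite !inE; apply/bigcupP/idP.
        move=> [s]; rewrite inE => /orP [sS2 xE|sS xE].
          case xN: (x \in NS); first by rewrite orbT.
          by rewrite /= orbF; apply/bigcupP; exists s.
        by apply/orP; right; apply/bigcupP; exists s.
      move=> /orP [/andP [_ /bigcupP [s sS2 xE]]|/bigcupP [s sS xE]].
        by exists s; rewrite // inE sS2.
      by exists s; rewrite // inE sS orbT.
    have -> : \bigcup_(s in S2) (E s :\: NS) = \bigcup_(s in S2) E s :\: NS.
      apply/setP => x; rewrite !inE; apply/bigcupP/andP.
        by move=> [s sS2]; rewrite inE => /andP [xN xE]; split=> //; apply/bigcupP; exists s.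
      by move=> [xN /bigcupP [s sS2 xE]]; exists s; rewrite // inE xN.
    have := leq_card_setU (\bigcup_(s in S2) E s :\: NS) NS.
    move=> [le1 _].
    have := leq_card_setU S2 S; move=> [_ eq2].
    move: eq2; rewrite dis => /eqP eq2.
    move=> H; move: H le1 eq2 Stight; rewrite -/NS; set X := (\bigcup_(s in S2) E s :\: NS); set U := (S2 :|: S); move=> *; lia.
  exists (fun s => if s \in S then f1 s else f2 s); split.
    move=> x y xP yP /=.
    case xS: (x \in S); case yS: (y \in S).
    + exact: f1i.
    + move=> e; have := f2E y; rewrite !inE yS yP /= => /(_ isT) /andP [fN _].
      move: fN; rewrite -e.
      by have -> : f1 x \in NS by apply/bigcupP; exists x => //; apply: f1E.
    + move=> e; have := f2E x; rewrite !inE xS xP /= => /(_ isT) /andP [fN _].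
      move: fN; rewrite e.
      by have -> : f1 y \in NS by apply/bigcupP; exists y => //; apply: f1E.
    + by apply: f2i; rewrite inE ?xS ?yS.
  move=> s sP /=; case sS: (s \in S); first exact: f1E.
  by have := f2E s; rewrite !inE sS sP /= => /(_ isT) /andP [].
- have hp : #|E p| > 0.
    have := hP [set p]; rewrite sub1set pP cards1 => /(_ isT).
    by rewrite big_set1.
  move: hp; rewrite card_gt0 => /set0Pn [c cE].
  have [f' [f'i f'E]] : exists f : 'I_n -> T, {in P :\ p &, injective f} /\
       forall s, s \in P :\ p -> f s \in E s :\ c.
    apply: IH.
      by have := cardsD1 p P; rewrite pP; lia.
    move=> S SP.
    have [->|Sn0] := eqVneq S set0; first by rewrite cards0.
    have SpP : S \proper P.
      apply/properP; split; first exact: subset_trans SP (subsetDl _ _).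
      by exists p => //; apply/negP => /(subsetP SP); rewrite !inE eqxx.
    have := none S; rewrite /= SpP Sn0 /= => /negbT; rewrite -ltnNge => lt.
    have -> : \bigcup_(s in S) (E s :\ c) = \bigcup_(s in S) E s :\ c.
      apply/setP => x; rewrite !inE; apply/bigcupP/andP.
        by move=> [s sS]; rewrite !inE => /andP [xN xE]; split=> //; apply/bigcupP; exists s.
      by move=> [xN /bigcupP [s sS xE]]; exists s; rewrite // !inE xN.
    have := cardsD1 c (\bigcup_(s in S) E s).
    have := cardsD1 c (\bigcup_(s in S) E s); move: lt; set U := \bigcup_(s in S) E s; set V := U :\ c; case: (c \in U); simpl; lia.
  exists (fun s => if s == p then c else f' s); split.
    move=> x y xP yP /=.
    case: (eqVneq x p) => [->|xp]; case: (eqVneq y p) => [->|yp] //.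
    + move=> e; have := f'E y; rewrite !inE yp yP /= => /(_ isT).
      by rewrite -e eqxx.
    + move=> e; have := f'E x; rewrite !inE xp xP /= => /(_ isT).
      by rewrite e eqxx.
    + by apply: f'i; rewrite !inE ?xp ?yp ?xP ?yP.
  move=> s sP /=; case: (eqVneq s p) => [->|sp] //.
  by have := f'E s; rewrite !inE sp sP /= => /(_ isT) /andP [].
Qed.


Section M.
Variable m : nat.
Implicit Types rows : seq {set 'I_m}.

Lemma mcm_ge rows L M : is_matching rows L M -> #|M| <= mcm rows L.
Proof. by move=> h; rewrite /mcm; apply: (@leq_bigmax_cond _ (fun M => is_matching rows L M) (fun M => #|M|) M h). Qed.

Lemma mcm_ex rows L : exists2 M, is_matching rows L M & #|M| = mcm rows L.
Proof.
have h0 : is_matching rows L set0.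
  by apply/andP; split; apply/forall_inP => p; rewrite inE.
have : 0 < #|[pred M | is_matching rows L M]|.
  by apply/card_gt0P; exists set0.
move/(eq_bigmax_cond (fun M : {set 'I_(size rows) * 'I_m} => #|M|)) => [M0 hM0 e].
by exists M0 => //; rewrite /mcm e.
Qed.

Lemma mcm_le rows L n :
  (forall M, is_matching rows L M -> #|M| <= n) -> mcm rows L <= n.
Proof. by move=> h; apply/bigmax_leqP. Qed.

Lemma matchingP rows L M : is_matching rows L M ->
  (forall p, p \in M -> (p.2 \in L) && (p.2 \in nth set0 rows p.1)) /\
  (forall p q, p \in M -> q \in M -> (p.1 = q.1 -> p = q) /\ (p.2 = q.2 -> p = q)).
Proof.
move=> /andP [/forall_inP h1 /forall_inP h2]; split => // p q pM qM.
have /forall_inP /(_ q qM) /andP [/implyP e1 /implyP e2] := h2 p pM.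
by split => e; apply/eqP; [apply: e1|apply: e2]; apply/eqP.
Qed.

Lemma mcm_nil (L : {set 'I_m}) : mcm [::] L = 0.
Proof.
apply/eqP; rewrite -leqn0; apply: mcm_le => M _.
by have := max_card M; rewrite card_prod card_ord.
Qed.

Lemma mcm_U1 rows x L : mcm rows (x |: L) <= (mcm rows L).+1.
Proof.
have [M hM <-] := mcm_ex rows (x |: L).
have [h1 h2] := matchingP hM.
set M' := [set p in M | p.2 != x].
have hM' : is_matching rows L M'.
  apply/andP; split; apply/forall_inP => p; rewrite inE => /andP [pM px].
    by have := h1 p pM; rewrite !inE (negbTE px).
  apply/forall_inP => q; rewrite inE => /andP [qM _].
  have [e1 e2] := h2 p q pM qM.
  by apply/andP; split; apply/implyP => /eqP e; apply/eqP; [apply: e1|apply: e2].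
have := mcm_ge hM'.
have : #|[set p in M | p.2 == x]| <= 1.
  apply/card_le1_eqP => p q; rewrite !inE => /andP [pM /eqP px] /andP [qM /eqP qx].
  by have [_ e2] := h2 q p qM pM; apply: e2; rewrite px qx.
have := cardsID [set p | p.2 == x] M.
have -> : M :&: [set p | p.2 == x] = [set p in M | p.2 == x].
  by apply/setP => p; rewrite !inE.
have -> : M :\: [set p | p.2 == x] = M'.
  by apply/setP => p; rewrite !inE andbC.
move=> <- h1' h2'; apply: leq_trans (leq_add h1' h2') _; by rewrite add1n.
Qed.


Definition bigU rows (s : seq nat) : {set 'I_m} := \bigcup_(j <- s) nth set0 rows j.
Definition Hc rows a := forall s : seq nat, uniq s -> s != [::] ->
  all (fun j => j < size rows) s -> size s + a <= #|bigU rows s|.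

Lemma mem_bigU rows s c : (c \in bigU rows s) = has (fun j => c \in nth set0 rows j) s.
Proof.
rewrite /bigU; elim: s => [|j s IH]; first by rewrite big_nil inE.
by rewrite big_cons inE IH.
Qed.

Lemma card_valin N (s : seq nat) : uniq s -> all (fun j => j < N) s ->
  #|[set j : 'I_N | val j \in s]| = size s.
Proof.
move=> us /allP sall.
rewrite cardE -(size_map val); apply: perm_size.
apply: uniq_perm; first by rewrite (map_inj_uniq val_inj) enum_uniq.
  exact: us.
move=> x; apply/mapP/idP.
  by move=> [j]; rewrite mem_enum inE => jx ->.
move=> xs; exists (Ordinal (sall x xs)) => //.
by rewrite mem_enum inE.
Qed.

Lemma upper rows (r : {set 'I_m}) (s : seq nat) :
  uniq s -> all (fun j => j < size rows) s -> r \subset bigU rows s ->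
  mcm rows (~: r) + size s + #|r| <= size rows + #|bigU rows s|.
Proof.
move=> us sall rU.
suff h : forall M, is_matching rows (~: r) M -> #|M| + size s + #|r| <= size rows + #|bigU rows s|.
  have [M hM <-] := mcm_ex rows (~: r); exact: h.
move=> M hM; have [h1 h2] := matchingP hM.
set K := [set p : 'I_(size rows) * 'I_m | val p.1 \in s].
have := cardsID K M.
set M1 := M :&: K; set M2 := M :\: K.
have c1 : #|M1| + #|r| <= #|bigU rows s|.
  have e : #|[set p.2 | p in M1]| = #|M1|.
    apply: card_in_imset => p q; rewrite !inE => /andP [pM _] /andP [qM _] e.
    by have [_ e2] := h2 p q pM qM; apply: e2.
  have sub : [set p.2 | p in M1] \subset bigU rows s :\: r.
    apply/subsetP => c /imsetP [p]; rewrite !inE => /andP [pM pK] ->.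
    have := h1 p pM; rewrite !inE => /andP [-> pn] /=.
    by rewrite mem_bigU; apply/hasP; exists (val p.1).
  have := subset_leq_card sub; rewrite e cardsD (setIidPr rU).
  have := subset_leq_card rU. move=> H0 H1; move: H0 H1; set x := #|M1|; set y := #|r|; set z := #|bigU rows s|; lia.
have c2 : #|M2| + size s <= size rows.
  have e : #|[set p.1 | p in M2]| = #|M2|.
    apply: card_in_imset => p q; rewrite !inE => /andP [_ pM] /andP [_ qM] e.
    by have [e1 _] := h2 p q pM qM; apply: e1.
  have sub : [set p.1 | p in M2] \subset ~: [set j : 'I_(size rows) | val j \in s].
    apply/subsetP => c /imsetP [p]; rewrite !inE => /andP [pK pM] ->.
    by [].
  have := subset_leq_card sub; rewrite e.
  have := cardsC [set j : 'I_(size rows) | val j \in s]; rewrite card_valin // card_ord.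
  set x := #|M2|; set y := #|~: _|; li.
move: c1 c2; set x1 := #|M1|; set x2 := #|M2|; set y := #|M|; li.
Qed.

Lemma lower rows a (Aw : {set 'I_m}) (x0 : 'I_m) : Hc rows a -> a <= #|Aw| ->
  size rows + a <= mcm rows (~: Aw) + #|Aw|.
Proof.
move=> hH haw.
set A' := [set x in take a (enum Aw)].
have cA' : #|A'| = a.
  rewrite /A' cardsE (card_uniqP _); last by apply: take_uniq; exact: enum_uniq.
  rewrite size_take -cardE; case: ltnP => // h; apply/eqP; by rewrite eqn_leq h haw.
have sA' : A' \subset Aw.
  by apply/subsetP => x; rewrite inE => /mem_take; rewrite mem_enum.
have hallc : forall S : {set 'I_(size rows)}, S \subset setT ->
    #|S| <= #|\bigcup_(s in S) (nth set0 rows s :&: ~: A')|.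
  move=> S _.
  have [->|Sn0] := eqVneq S set0; first by rewrite cards0.
  set sq := [seq val x | x <- enum S].
  have u1 : uniq sq by rewrite (map_inj_uniq val_inj) enum_uniq.
  have u2 : sq != [::].
    by rewrite -size_eq0 size_map -cardE cards_eq0.
  have u3 : all (fun j => j < size rows) sq.
    by apply/allP => j /mapP [x _ ->]; exact: ltn_ord.
  have h := hH sq u1 u2 u3.
  have e : size sq = #|S| by rewrite size_map cardE.
  rewrite e in h.
  have sub : bigU rows sq :\: A' \subset \bigcup_(s in S) (nth set0 rows s :&: ~: A').
    apply/subsetP => c; rewrite inE mem_bigU => /andP [cA /hasP [j /mapP [x xS ->] cx]].
    by apply/bigcupP; exists x; [rewrite -mem_enum | rewrite in_setI cx in_setC cA].
  have := subset_leq_card sub; rewrite cardsD.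
  have := subset_leq_card (subsetIr (bigU rows sq) A').
  move: h; set x := #|S|; set y := #|bigU rows sq|; set z := #|_ :&: A'|; li.
have [f [fi fE]] := hall x0 hallc.
set X := [set j | f j \notin Aw].
set M := [set (j, f j) | j in X].
have hM : is_matching rows (~: Aw) M.
  apply/andP; split; apply/forall_inP => p /imsetP [j]; rewrite inE => jX -> /=.
    have := fE j; rewrite inE => /(_ isT); rewrite !inE jX => /andP [-> _].
    by [].
  apply/forall_inP => q /imsetP [j']; rewrite inE => _ -> /=.
  apply/andP; split; apply/implyP => /eqP e; first by rewrite e.
  by rewrite (fi j j') ?inE.
have cM : #|M| = #|X|.
  by apply: card_imset => x y [].
have cX : #|~: X| <= #|Aw :\: A'|.
  have e : #|f @: (~: X)| = #|~: X|.
    by apply: card_in_imset => x y _ _; apply: fi; rewrite inE.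
  rewrite -e; apply: subset_leq_card; apply/subsetP => c /imsetP [j].
  rewrite !inE negbK => jA ->; rewrite jA andbT.
  by have := fE j; rewrite !inE => /(_ isT) /andP [_].
have := mcm_ge hM.
have := cardsC X; rewrite card_ord.
move: cX; rewrite cardsD (setIidPr sA') cA'.
move: cM haw; set x1 := #|M|; set x2 := #|X|; set x3 := #|~: X|; set x4 := #|Aw|; li.
Qed.


Lemma Hc_rcons rows a (w : 'I_m) (Aw : {set 'I_m}) : Hc rows a -> w \notin Aw ->
  a <= #|Aw| -> mcm rows (~: Aw) != (mcm rows (~: (w |: Aw))).+1 ->
  Hc (rcons rows (w |: Aw)) a.
Proof.
move=> hH wA haw hun s us sn0; rewrite size_rcons => sall.
set r := w |: Aw.
have nthr : forall j, j < size rows -> nth set0 (rcons rows r) j = nth set0 rows j.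
  by move=> j hj; rewrite nth_rcons hj.
have [Ns|Nns] := boolP (size rows \in s); last first.
  have sall' : all (fun j => j < size rows) s.
    apply/allP => j js; have := allP sall j js; rewrite ltnS leq_eqVlt.
    by case/orP => // /eqP e; move: Nns; rewrite -e js.
  have -> : bigU (rcons rows r) s = bigU rows s.
    by apply: eq_big_seq => j js; apply: nthr; exact: (allP sall' j js).
  exact: hH.
set s' := rem (size rows) s.
have ps := perm_to_rem Ns.
have us' : uniq s' by exact: rem_uniq.
have sall' : all (fun j => j < size rows) s'.
  apply/allP => j; rewrite (mem_rem_uniq _ us) inE => /andP [jn js].
  by have := allP sall j js; rewrite ltnS leq_eqVlt (negbTE jn).
have -> : size s = (size s').+1 by rewrite (perm_size ps).
have -> : bigU (rcons rows r) s = r :|: bigU rows s'.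
  rewrite /bigU (perm_big _ ps) big_cons nth_rcons ltnn eqxx.
  congr (_ :|: _); apply: eq_big_seq => j js; apply: nthr; exact: (allP sall' j js).
have cr : #|r| = #|Aw|.+1 by rewrite cardsU1 wA.
have [s'0|s'n0] := eqVneq s' [::].
  rewrite s'0 /bigU big_nil setU0 cr /=; by rewrite add1n ltnS.
have IH := hH s' us' s'n0 sall'.
set U := bigU rows s' in IH *.
rewrite leqNgt; apply/negP => hlt.
have hU : U \subset r :|: U by exact: subsetUr.
have cU := subset_leq_card hU.
have eU : U == r :|: U.
  by rewrite eqEcard hU /=; move: hlt cU IH; set x := #|r :|: U|; set y := #|U|; rewrite addSn ltnS => h1 _ h3; exact: leq_trans h1 h3.
have rU : r \subset U by rewrite (eqP eU) subsetUl.
have cUe : #|U| = size s' + a.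
  by move: hlt cU IH; set x := #|r :|: U|; set y := #|U|; rewrite addSn ltnS => h1 h2 h3; apply/eqP; rewrite eqn_leq h3 andbT; exact: leq_trans h2 h1.
have up := upper us' sall' rU.
have lo := lower w hH haw.
have u1 := mcm_U1 rows w (~: r).
have ew : w |: ~: r = ~: Aw.
  apply/setP => x; rewrite !inE; case: (eqVneq x w) => [->|xw] /=.
    by rewrite (negbTE wA).
  by [].
rewrite ew in u1.
move: hun; rewrite -/r => /negP; apply; apply/eqP.
move: up lo u1 cUe cr; rewrite -/U.
set x1 := mcm rows (~: r); set x2 := mcm rows (~: Aw); set x3 := #|r|; set x4 := #|Aw|; set x5 := #|U|.
clearbody x1 x2 x3 x4 x5 U s'; move: (size s') (size rows) => p q; intros; lia.
Qed.

Lemma Hc_nil a : Hc ([::] : seq {set 'I_m}) a.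
Proof. by move=> [|j s] //. Qed.

End M.

Lemma Amin_le m (A : 'I_m -> {set 'I_m}) w : Amin A <= #|A w|.
Proof.
have h : forall s, w \in s -> \big[minn/m]_(i <- s) #|A i| <= #|A w|.
  elim => // i s IH; rewrite in_cons big_cons => /orP [/eqP ->|ws].
    exact: geq_minl.
  exact: leq_trans (geq_minr _ _) (IH ws).
exact: h (mem_index_enum w).
Qed.

Lemma Amin_lem m (A : 'I_m -> {set 'I_m}) : Amin A <= m.
Proof.
rewrite /Amin; apply: (big_ind (fun x => x <= m)) => //.
  by move=> x y hx _; apply: leq_trans (geq_minl _ _) hx.
by move=> i _; apply: leq_trans (max_card _) _; rewrite card_ord.
Qed.

Lemma Cw m (A : 'I_m -> {set 'I_m}) w : w \notin A w -> w |: interf A w = ~: A w.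
Proof.
move=> wA; apply/setP => x; rewrite /interf !inE; case: (eqVneq x w) => [->|xw] /=.
  by rewrite (negbTE wA).
by [].
Qed.

Lemma run_bound m (A : 'I_m -> {set 'I_m}) (hA : forall i, i \notin A i) N rows k :
  umcd_from A N rows k ->
  (forall w, w \in N -> mcm rows (w |: interf A w) != (mcm rows (interf A w)).+1) ->
  Hc rows (Amin A) -> k + Amin A <= m.
Proof.
elim => [rows0|N0 rows0 w k0 wN _ _ IH] inv hH.
  case: rows0 hH inv => [|r rs] hH _; first exact: Amin_lem.
  have hall : all (fun j => j < size (r :: rs)) (iota 0 (size (r :: rs))).
    by apply/allP => j; rewrite mem_iota add0n => /andP [_].
  have := hH (iota 0 (size (r :: rs))) (iota_uniq _ _) isT hall; rewrite size_iota => h2.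
  apply: leq_trans h2 _.
  by apply: leq_trans (max_card _) _; rewrite card_ord.
apply: IH.
  by move=> i; rewrite !inE => /andP [_ ->].
apply: Hc_rcons => //; first exact: Amin_le.
have := inv w wN; rewrite Cw //.
Qed.

Unset Implicit Arguments.

Theorem theorem3 (m : nat) (A : 'I_m -> {set 'I_m})
    (hA : forall i : 'I_m, i \notin A i) (k : nat) :
  umcd_output A k -> k <= beta_MDS A /\ beta_MDS A = m - Amin A.
Proof.
move=> h; split => //.
have inv0 : forall w, w \in [set: 'I_m] ->
    mcm ([::] : seq {set 'I_m}) (w |: interf A w) != (mcm ([::] : seq {set 'I_m}) (interf A w)).+1.
  by move=> w _; rewrite !mcm_nil.
have := run_bound hA h inv0 (@Hc_nil m (Amin A)).
rewrite /beta_MDS; move: (Amin A) => a; intros; lia.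
Qed.
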